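(* Consider the decentralized setting of the context. Assume the maximum delay is bounded by $\tau$ and that all loss functions $f^i_t$ are $G$-Lipschitz with respect to $\|\cdot\|$. For any $p\in\mathcal X$ with $h(p)\le r^2$, running D-DDA with constant stepsize \[\eta^i_t\equiv\eta=\frac{r}{G\bar M\sqrt{(2\tau+1)T}}\] guarantees, for any choice of reference indices $j_t\in\{1,\dots,M_t\}$, \[R^{g}_T(p)\le 2rG\bar M\sqrt{(2\tau+1)T}=O(\bar M\sqrt{\tau T}).\]
   Context: Let $\mathcal V$ be a finite-dimensional real vector space with norm $\|\cdot\|$ and dual norm $\|\cdot\|_*$, and $\mathcal X\subset\mathcal V$ closed convex. A regularizer $h:\mathcal V\to\mathbb R\cup\{+\infty\}$ is lower semicontinuous, $1$-strongly convex w.r.t. $\|\cdot\|$ on $\mathcal X$, with $\mathcal X\subset\operatorname{dom}h$, whose subdifferential admits a continuous selection, and $h\ge0$. Decentralized protocol: at each time $t=1,\dots,T$, $M_t\ge1$ agents are active, labelled $1,\dots,M_t$; agent $i$ plays $x^i_t\in\mathcal X$ against a convex loss $f^i_t$ (with $\mathcal X\subset\operatorname{dom}\partial f^i_t$) and the subgradient $g^i_t\in\partial f^i_t(x^i_t)$ is later shared. $\mathcal S^i_t\subset\{(j,s):1\le s\le t-1,\ 1\le j\le M_s\}$ is the set of (agent, time) indices of the feedback available for playing $x^i_t$. D-DDA: $x^i_t=\arg\min_{x\in\mathcal X}\{\sum_{(j,s)\in\mathcal S^i_t}\langle g^j_s,x\rangle+h(x)/\eta^i_t\}$. Maximum delay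 bounded by $\tau$: for all $t$, $i$, every $s\le t-\tau-1$ and $j\le M_s$, $(j,s)\in\mathcal S^i_t$. $\bar M=\sqrt{\frac1T\sum_{t=1}^TM_t^2}$. Collective regret with reference agents $j_t$: $R^{g}_T(p)=\sum_{t=1}^T\sum_{i=1}^{M_t}f^i_t(x^{j_t}_t)-\sum_{t=1}^T\sum_{i=1}^{M_t}f^i_t(p)$. *)

(* Defs.v *)
From HB Require Import structures.
From mathcomp Require Import all_boot all_order all_algebra.
From mathcomp Require Import all_classical all_reals all_analysis.
Set Implicit Arguments. Unset Strict Implicit. Unset Printing Implicit Defensive.
Import Order.TTheory GRing.Theory Num.Theory.
Import numFieldNormedType.Exports.
Local Open Scope ring_scope.
Local Open Scope classical_set_scope.

(* The finite-dimensional real vector space V is modelled as 'rV[R]_n; its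
   dual is identified with 'rV[R]_n via the standard pairing [dot]. *)
Definition dot {R : realType} {n : nat} (u v : 'rV[R]_n) : R :=
  \sum_(k < n) u ord0 k * v ord0 k.

Definition is_norm {R : realType} {n : nat} (nrm : 'rV[R]_n -> R) : Prop :=
  [/\ forall x y, nrm (x + y) <= nrm x + nrm y,
      forall (a : R) x, nrm (a *: x) = `|a| * nrm x
    & forall x, nrm x = 0 -> x = 0].

Definition strongly_convex_on {R : realType} {n : nat} (nrm : 'rV[R]_n -> R)
  (X : set 'rV[R]_n) (h : 'rV[R]_n -> \bar R) : Prop :=
  forall x y (l : R), X x -> X y -> 0 <= l <= 1 ->
    (h (l *: x + (1 - l) *: y)%R <=
     (l%:E * h x + (1 - l)%:E * h y - (l * (1 - l) / 2 * nrm (x - y) ^+ 2)%:E))%E.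

Definition ext_subgrad {R : realType} {n : nat} (h : 'rV[R]_n -> \bar R)
  (x v : 'rV[R]_n) : Prop :=
  h x \is a fin_num /\ forall y, (h x + (dot v (y - x))%:E <= h y)%E.

Definition subdiff_cont_selection {R : realType} {n : nat}
  (h : 'rV[R]_n -> \bar R) : Prop :=
  exists s : 'rV[R]_n -> 'rV[R]_n,
    (forall x, (exists v, ext_subgrad h x v) -> ext_subgrad h x (s x)) /\
    {within [set x | exists v, ext_subgrad h x v], continuous s}.

Definition convex_fun {R : realType} {n : nat} (f : 'rV[R]_n -> R) : Prop :=
  forall x y (l : R), 0 <= l <= 1 ->
    f (l *: x + (1 - l) *: y) <= l * f x + (1 - l) * f y.

Definition lipschitz_wrt {R : realType} {n : nat} (nrm : 'rV[R]_n -> R)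
  (G : R) (f : 'rV[R]_n -> R) : Prop :=
  forall x y, `|f x - f y| <= G * nrm (x - y).

Definition subgrad {R : realType} {n : nat} (f : 'rV[R]_n -> R)
  (x g : 'rV[R]_n) : Prop :=
  forall y, f x + dot g (y - x) <= f y.

(* sum of the feedback available to agent i at time t:
   \sum_{(j,s) in S^i_t} g^j_s   (S t i is a predicate on pairs (j,s)) *)
Definition cum_feedback {R : realType} {n : nat} (M : nat -> nat)
  (g : nat -> nat -> 'rV[R]_n) (S : nat -> nat -> pred (nat * nat))
  (t i : nat) : 'rV[R]_n :=
  \sum_(1 <= s < t) \sum_(1 <= j < (M s).+1 | S t i (j, s)) g s j.

Definition Mbar {R : realType} (M : nat -> nat) (T : nat) : R :=
  Num.sqrt ((T%:R)^-1 * \sum_(1 <= t < T.+1) ((M t)%:R) ^+ 2).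

(* Main.v *)
Require Import Defs.
From HB Require Import structures.
From mathcomp Require Import all_boot all_order all_algebra.
From mathcomp Require Import all_classical all_reals all_analysis.
From mathcomp Require Import ring lra zify.
Import Order.TTheory GRing.Theory Num.Theory.
Import numFieldNormedType.Exports.

Set Implicit Arguments. Unset Strict Implicit.

Lemma amgm2 (a b : nat) : (2 * (a * b) <= a ^ 2 * 1 + b ^ 2)%N.
Proof.
rewrite muln1 !expnS !expn0 !muln1.
case: (leqP a b) => h.
  have -> : b = a + (b - a) by lia.
  move: (b - a) => d; nia.
have -> : a = b + (a - b) by lia.
move: (a - b) => d; nia.
Qed.

Lemma count_itv (a b lo tau : nat) :
  (\sum_(a <= k < b | (lo <= k) && (k < lo + tau)) 1 <= minn b (lo + tau) - lo)%N.
Proof.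
elim: b => [|b IH]; first by rewrite big_geq.
case: (leqP a b) => ab; last by rewrite big_geq.
rewrite big_mkcond big_nat_recr //= -big_mkcond /=.
case: ifP => /= hk; lia.
Qed.

Lemma count_le (a b lo tau : nat) (P : pred nat) :
  (forall k, (a <= k < b)%N -> P k -> (lo <= k) && (k < lo + tau)) ->
  (\sum_(a <= k < b | P k) 1 <= tau)%N.
Proof.
move=> hP; apply: leq_trans (_ : \sum_(a <= k < b | (lo <= k) && (k < lo + tau)) 1 <= _)%N.
  rewrite [X in (_ <= X)%N]big_mkcond /= big_mkcond /= big_nat_cond [X in (_ <= X)%N]big_nat_cond; apply: leq_sum => k /andP[hk _].
  by case: ifP => // /(hP k hk) ->.
apply: leq_trans (count_itv a b lo tau) _; lia.
Qed.

Definition Pd (M : nat -> nat) (tau t : nat) : nat :=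
  \sum_(1 <= s < t | (t <= s + tau)%N) M s.

Lemma comb (M : nat -> nat) (tau T : nat) :
  (2 * \sum_(1 <= t < T.+1) M t * Pd M tau t <= 2 * tau * \sum_(1 <= t < T.+1) M t ^ 2)%N.
Proof.
rewrite big_distrr /=.
rewrite /Pd.
have step1 : forall t, (2 * (M t * \sum_(1 <= s < t | (t <= s + tau)%N) M s) <=
   M t ^ 2 * \sum_(1 <= s < t | (t <= s + tau)%N) 1 +
   \sum_(1 <= s < t | (t <= s + tau)%N) M s ^ 2)%N.
  move=> t; rewrite !big_distrr /= -big_split /=.
  apply: leq_sum => s _; exact: amgm2.
apply: (@leq_trans (\sum_(1 <= t < T.+1) (M t ^ 2 * \sum_(1 <= s < t | (t <= s + tau)%N) 1 +
   \sum_(1 <= s < t | (t <= s + tau)%N) M s ^ 2))).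
  by apply: leq_sum => t _; exact: step1.
rewrite big_split /=.
have A1 : (\sum_(1 <= i < T.+1) M i ^ 2 * \sum_(1 <= s < i | (i <= s + tau)%N) 1
          <= tau * \sum_(1 <= t < T.+1) M t ^ 2)%N.
  rewrite big_distrr /=; apply: leq_sum => t _.
  rewrite mulnC leq_mul2r; apply/orP; right.
  apply: (@count_le _ _ (t - tau)) => s hs hs2; apply/andP; lia.
have A2 : (\sum_(1 <= i < T.+1) \sum_(1 <= s < i | (i <= s + tau)%N) M s ^ 2
          <= tau * \sum_(1 <= t < T.+1) M t ^ 2)%N.
  have -> : \sum_(1 <= i < T.+1) \sum_(1 <= s < i | (i <= s + tau)%N) M s ^ 2 =
            \sum_(1 <= i < T.+1) \sum_(1 <= s < T.+1 | (s < i) && (i <= s + tau)%N) M s ^ 2.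
    apply: eq_big_nat => i /andP[i1 iT].
    have iT1 : (i <= T.+1)%N by lia.
    rewrite [RHS](big_cat_nat i1 iT1) /=.
    rewrite [X in _ = _ + X]big1_seq ?addn0; last first.
      move=> s /andP[/andP[h1 _] /[!mem_index_iota] h2]; lia.
    by rewrite big_nat_cond [RHS]big_nat_cond; apply: eq_bigl => s; lia.
  under eq_bigr => i _ do rewrite big_mkcond /=.
  rewrite exchange_big_nat /= big_distrr /=; apply: leq_sum => s _.
  rewrite -big_mkcond /=.
  have -> : \sum_(1 <= i < T.+1 | (s < i) && (i <= s + tau)) M s ^ 2 =
     M s ^ 2 * \sum_(1 <= i < T.+1 | (s < i) && (i <= s + tau)) 1.
    by rewrite big_distrr /=; apply: eq_bigr => i _; rewrite muln1.
  rewrite mulnC leq_mul2r; apply/orP; right.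
  apply: (@count_le _ _ s.+1) => t ht /andP[h1 h2]; apply/andP; lia.
lia.
Qed.

Local Open Scope ring_scope.
Local Open Scope classical_set_scope.

Section Dot.
Variables (R : realType) (n : nat).
Implicit Types u v w : 'rV[R]_n.

Lemma dotDl u v w : dot (u + v) w = dot u w + dot v w.
Proof. by rewrite /dot -big_split; apply: eq_bigr => k _; rewrite mxE mulrDl. Qed.
Lemma dotDr u v w : dot w (u + v) = dot w u + dot w v.
Proof. by rewrite /dot -big_split; apply: eq_bigr => k _; rewrite mxE mulrDr. Qed.
Lemma dotZl a u w : dot (a *: u) w = a * dot u w.
Proof. by rewrite /dot mulr_sumr; apply: eq_bigr => k _; rewrite mxE mulrA. Qed.
Lemma dotZr a u w : dot w (a *: u) = a * dot w u.
Proof. by rewrite /dot mulr_sumr; apply: eq_bigr => k _; rewrite mxE mulrCA. Qed.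
Lemma dot0l w : dot 0 w = 0.
Proof. by rewrite /dot big1 // => k _; rewrite mxE mul0r. Qed.
Lemma dotNl u w : dot (- u) w = - dot u w.
Proof. by rewrite -scaleN1r dotZl mulN1r. Qed.
Lemma dotNr u w : dot w (- u) = - dot w u.
Proof. by rewrite -scaleN1r dotZr mulN1r. Qed.
Lemma dotBl u v w : dot (u - v) w = dot u w - dot v w.
Proof. by rewrite dotDl dotNl. Qed.
Lemma dotBr u v w : dot w (u - v) = dot w u - dot w v.
Proof. by rewrite dotDr dotNr. Qed.
Lemma dot_suml (I : Type) (r : seq I) (P : pred I) (F : I -> 'rV[R]_n) w :
  dot (\sum_(i <- r | P i) F i) w = \sum_(i <- r | P i) dot (F i) w.
Proof. by apply: (big_morph (fun u => dot u w)); [move=> u v; exact: dotDl| exact: dot0l]. Qed.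
End Dot.

Lemma convex_mem (R : realType) (n : nat) (X : set 'rV[R]_n) x y (l : R) :
  convex_set (X : set (convex_lmodType _)) -> X x -> X y -> 0 <= l -> l <= 1 ->
  X (l *: x + (1 - l) *: y).
Proof.
move=> cX Xx Xy l0 l1.
have := cX x y (Itv01 l0 l1); rewrite !inE => /(_ Xx Xy).
by [].
Qed.

Definition Phi {R : realType} {n : nat} (h : 'rV[R]_n -> \bar R) (eta : R)
  (A y : 'rV[R]_n) : R := dot A y + fine (h y) / eta.

Lemma sc_real (R : realType) (n : nat) (nrm : 'rV[R]_n -> R) (X : set 'rV[R]_n)
  (h : 'rV[R]_n -> \bar R) x y l :
  strongly_convex_on nrm X h -> (forall y, X y -> h y \is a fin_num) ->
  convex_set (X : set (convex_lmodType _)) ->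
  X x -> X y -> 0 <= l -> l <= 1 ->
  fine (h (l *: x + (1 - l) *: y)) <=
  l * fine (h x) + (1 - l) * fine (h y) - l * (1 - l) / 2 * nrm (x - y) ^+ 2.
Proof.
move=> sc hf cX Xx Xy l0 l1.
have Xz := convex_mem cX Xx Xy l0 l1.
have := sc x y l Xx Xy; rewrite l0 l1 => /(_ isT) H.
rewrite -(fineK (hf _ Xz)) -(fineK (hf _ Xx)) -(fineK (hf _ Xy)) in H.
rewrite -!EFinM -EFinD in H.
by rewrite -lee_fin.
Qed.

Lemma growth (R : realType) (n : nat) (nrm : 'rV[R]_n -> R) (X : set 'rV[R]_n)
  (h : 'rV[R]_n -> \bar R) (eta e l : R) (A w y : 'rV[R]_n) :
  strongly_convex_on nrm X h -> (forall y, X y -> h y \is a fin_num) ->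
  convex_set (X : set (convex_lmodType _)) -> 0 < eta ->
  X w -> X y -> (forall z, X z -> Phi h eta A w <= Phi h eta A z + e) ->
  0 <= l -> l <= 1 ->
  l * (1 - l) / (2 * eta) * nrm (y - w) ^+ 2 - e <= l * (Phi h eta A y - Phi h eta A w).
Proof.
move=> sc hf cX eta0 Xw Xy wmin l0 l1.
have Xz := convex_mem cX Xy Xw l0 l1.
have hz := sc_real sc hf cX Xy Xw l0 l1.
have := wmin _ Xz; rewrite /Phi dotDr !dotZr.
move: hz.
set D := nrm (y - w) ^+ 2.
set hz := fine (h (l *: y + (1 - l) *: w)).
set a := fine (h y); set b := fine (h w).
set dy := dot A y; set dw := dot A w.
move=> hz1 e2.
have e1 : hz / eta <= (l * a + (1 - l) * b - l * (1 - l) / 2 * D) / eta.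
  by rewrite ler_pM2r ?invr_gt0.
have -> : l * (1 - l) / (2 * eta) * D = (l * (1 - l) / 2 * D) / eta.
  by rewrite invfM; field; rewrite gt_eqF.
have E1 : (l * a + (1 - l) * b - l * (1 - l) / 2 * D) / eta = 
   l * (a / eta) + (1 - l) * (b / eta) - (l * (1 - l) / 2 * D) / eta.
  by field; rewrite gt_eqF.
rewrite E1 in e1.
move: e1 e2; set a' := a / eta; set b' := b / eta; set c := _ / eta.
move=> e1 e2.
nra.
Qed.

Lemma nrmN (R : realType) (n : nat) (nrm : 'rV[R]_n -> R) v :
  is_norm nrm -> nrm (- v) = nrm v.
Proof. by case=> _ hZ _; rewrite -scaleN1r hZ normrN normr1 mul1r. Qed.

Lemma nrm_ge0 (R : realType) (n : nat) (nrm : 'rV[R]_n -> R) v :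
  is_norm nrm -> 0 <= nrm v.
Proof.
move=> hn; have [hT _ _] := hn.
have := hT v (- v); rewrite subrr nrmN //.
have -> : nrm 0 = 0 by case: hn => _ hZ _; rewrite -(scale0r 0) hZ normr0 mul0r.
lra.
Qed.

Lemma stab_arith (R : realType) (eta K d e l D B : R) :
  0 < eta -> 0 <= K -> 0 < d -> B = eta * K + d -> l * (2 * B) = d ->
  0 <= e -> 8 * eta * e <= d ^+ 2 -> 0 <= D ->
  l * (1 - l) * D ^+ 2 - 2 * eta * e <= eta * l * K * D -> D <= B.
Proof.
move=> eta0 K0 d0 BE lE e0 ee D0 H.
have eK : 0 <= eta * K by rewrite mulr_ge0 // ltW.
have B0 : 0 < B by rewrite BE; nra.
have l0 : 0 < l by nra.
have lB : l * B = d / 2 by lra.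
have l1 : (1 - l) * B - eta * K = d / 2 by nra.
rewrite leNgt; apply/negP => DB.
have l2 : l <= 1 / 2.
  have h1 : (l - 1 / 2) * B <= 0 by rewrite mulrBl lB; lra.
  rewrite pmulr_lle0 // in h1; lra.
have lD : 0 <= (1 - l) * D by apply: mulr_ge0 => //; lra.
have P1 : 0 < (D - B) * ((1 - l) * (D + B) - eta * K).
  apply: mulr_gt0; first by lra.
  rewrite mulrDr; lra.
have P2 : l * B * ((1 - l) * B - eta * K) = d ^+ 2 / 4 by rewrite lB l1; field.
have P3 : 0 < l * ((D - B) * ((1 - l) * (D + B) - eta * K)) by apply: mulr_gt0.
have P4 : l * ((D - B) * ((1 - l) * (D + B) - eta * K)) =
  (l * (1 - l) * D ^+ 2 - eta * l * K * D) - l * B * ((1 - l) * B - eta * K) by ring.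
rewrite P4 P2 in P3.
have : 2 * eta * e <= d ^+ 2 / 4 by lra.
lra.
Qed.

Lemma stab (R : realType) (n : nat) (nrm : 'rV[R]_n -> R) (X : set 'rV[R]_n)
  (h : 'rV[R]_n -> \bar R) (eta e d K : R) (A A' w w' : 'rV[R]_n) :
  is_norm nrm ->
  strongly_convex_on nrm X h -> (forall y, X y -> h y \is a fin_num) ->
  convex_set (X : set (convex_lmodType _)) -> 0 < eta ->
  X w -> X w' -> (forall z, X z -> Phi h eta A w <= Phi h eta A z + e) ->
  (forall z, X z -> Phi h eta A' w' <= Phi h eta A' z + e) ->
  0 <= K -> (forall v, dot (A' - A) v <= K * nrm v) ->
  0 < d -> 0 <= e -> 8 * eta * e <= d ^+ 2 ->
  nrm (w - w') <= eta * K + d.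
Proof.
move=> hn sc hf cX eta0 Xw Xw' wm wm' K0 dK d0 e0 ed.
set B := eta * K + d.
have B0 : 0 < B by rewrite /B; nra.
set l := d / (2 * B).
have lE : l * (2 * B) = d by rewrite /l mulfVK // gt_eqF // mulr_gt0.
have l0 : 0 <= l by rewrite /l divr_ge0 // ?mulr_ge0 ?ltW.
have l1 : l <= 1.
  rewrite /l ler_pdivrMr ?mulr_gt0 // mul1r /B; nra.
have g1 := growth sc hf cX eta0 Xw Xw' wm l0 l1.
have g2 := growth sc hf cX eta0 Xw' Xw wm' l0 l1.
have eN : nrm (w' - w) = nrm (w - w') by rewrite -opprB nrmN.
rewrite eN in g1.
have kk := dK (w - w').
have dd : Phi h eta A w' - Phi h eta A w + (Phi h eta A' w - Phi h eta A' w') = dot (A' - A) (w - w').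
  rewrite /Phi !dotBl !dotBr; ring.
have D0 := nrm_ge0 (w - w') hn.
apply: (stab_arith eta0 K0 d0 erefl lE e0 ed D0).
move: g1 g2 dd kk; set D := nrm (w - w').
set p1 := Phi h eta A w' - _; set p2 := Phi h eta A' w - _.
move=> g1 g2 dd kk.
have H : l * (1 - l) / (2 * eta) * D ^+ 2 * 2 - 2 * e <= l * (p1 + p2) by lra.
have H2 : l * (p1 + p2) <= l * (K * D) by rewrite dd ler_wpM2l.
have H3 : l * (1 - l) / (2 * eta) * D ^+ 2 * 2 * eta = l * (1 - l) * D ^+ 2.
  by field; rewrite gt_eqF.
have H4 : (l * (1 - l) / (2 * eta) * D ^+ 2 * 2 - 2 * e) * eta <= l * (K * D) * eta.
  by rewrite ler_pM2r //; lra.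
rewrite mulrBl H3 in H4.
nra.
Qed.

Lemma eps_min (R : realType) (n : nat) (nrm : 'rV[R]_n -> R) (X : set 'rV[R]_n)
  (h : 'rV[R]_n -> \bar R) (eta e K : R) (A0 A x0 : 'rV[R]_n) :
  is_norm nrm ->
  strongly_convex_on nrm X h -> (forall y, X y -> h y \is a fin_num) ->
  convex_set (X : set (convex_lmodType _)) -> 0 < eta ->
  X x0 -> (forall z, X z -> Phi h eta A0 x0 <= Phi h eta A0 z + 0) ->
  0 <= K -> (forall v, dot (A - A0) v <= K * nrm v) -> 0 < e ->
  exists y, X y /\ forall z, X z -> Phi h eta A y <= Phi h eta A z + e.
Proof.
move=> hn sc hf cX eta0 Xx0 x0m K0 dK e0.
set c := Phi h eta A0 x0 + dot (A - A0) x0 - eta * K ^+ 2.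
have lb : forall z, X z -> c <= Phi h eta A z.
  move=> z Xz.
  have l0 : (0 : R) <= 1 / 2 by lra.
  have l1 : (1 : R) / 2 <= 1 by lra.
  have g := growth sc hf cX eta0 Xx0 Xz x0m l0 l1.
  have E1 : Phi h eta A z = Phi h eta A0 z + dot (A - A0) x0 - dot (A - A0) (x0 - z).
    by rewrite /Phi !dotBl !dotBr; ring.
  have k := dK (x0 - z).
  have eN : nrm (x0 - z) = nrm (z - x0) by rewrite -opprB nrmN.
  rewrite eN in k.
  rewrite E1 /c.
  move: g k; set D := nrm (z - x0); set p := Phi h eta A0 z; set q := Phi h eta A0 x0.
  set dd := dot (A - A0) (x0 - z).
  move=> g k.
  have g2 : D ^+ 2 / (4 * eta) <= p - q.
    have -> : D ^+ 2 / (4 * eta) = (1 / 2 * (1 - 1 / 2) / (2 * eta) * D ^+ 2 - 0) * 2.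
      by field; rewrite gt_eqF.
    lra.
  have sq : 0 <= (D - 2 * eta * K) ^+ 2 / (4 * eta) by rewrite divr_ge0 ?sqr_ge0 // mulr_ge0 // ltW.
  have sqE : (D - 2 * eta * K) ^+ 2 / (4 * eta) = D ^+ 2 / (4 * eta) - K * D + eta * K ^+ 2.
    by field; rewrite gt_eqF.
  lra.
set S := [set Phi h eta A z | z in X].
have hS : has_inf S.
  split; first by exists (Phi h eta A x0), x0.
  by exists c => _ [z Xz <-]; apply: lb.
have [v [y Xy <-] vlt] := inf_adherent e0 hS.
exists y; split => // z Xz.
have : inf S <= Phi h eta A z by apply: (ge_inf hS.2); exists z.
lra.
Qed.

Lemma grad_abs (R : realType) (n : nat) (nrm : 'rV[R]_n -> R) (G : R) f x g v :
  is_norm nrm -> lipschitz_wrt nrm G f -> subgrad f x g -> `|dot g v| <= G * nrm v.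
Proof.
move=> hn lip sg; rewrite ler_norml; apply/andP; split.
- have := sg (x - v); have := lip (x - v) x.
  have -> : x - v - x = - v by rewrite addrAC subrr add0r.
  rewrite dotNr nrmN //.
  move=> /ler_normlP [h1 h2] h3; lra.
- have := sg (x + v); have := lip (x + v) x.
  have -> : x + v - x = v by rewrite addrAC subrr add0r.
  move=> /ler_normlP [h1 h2] h3; lra.
Qed.

Lemma dot_sum_le (R : realType) (n : nat) (a b : nat) (F : nat -> 'rV[R]_n) (B : nat -> R) v :
  (forall i, (a <= i < b)%N -> dot (F i) v <= B i) ->
  dot (\sum_(a <= i < b) F i) v <= \sum_(a <= i < b) B i.
Proof. by move=> H; rewrite dot_suml; apply: ler_sum_nat. Qed.

Lemma dsum_bound (R : realType) (n : nat) (nrm : 'rV[R]_n -> R) (G : R)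
  (M : nat -> nat) (g : nat -> nat -> 'rV[R]_n) (u : nat) (c : nat -> nat -> R) v :
  (forall s j, (1 <= s < u)%N -> (1 <= j <= M s)%N -> `|dot (g s j) v| <= G * nrm v) ->
  dot (\sum_(1 <= s < u) \sum_(1 <= j < (M s).+1) c s j *: g s j) v <=
  \sum_(1 <= s < u) \sum_(1 <= j < (M s).+1) `|c s j| * (G * nrm v).
Proof.
move=> gb; apply: dot_sum_le => s hs; apply: dot_sum_le => j hj.
rewrite dotZl; apply: le_trans (ler_norm _) _; rewrite normrM.
by apply: ler_wpM2l => //; apply: gb.
Qed.

Lemma coef_bound (R : realType) (M : nat -> nat) (tau t : nat) (c : nat -> nat -> R) (K : R) :
  0 <= K -> (forall s j, (1 <= s < t)%N -> (1 <= j <= M s)%N -> `|c s j| <= 1) ->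
  (forall s j, (1 <= s < t)%N -> (1 <= j <= M s)%N -> (s + tau + 1 <= t)%N -> c s j = 0) ->
  \sum_(1 <= s < t) \sum_(1 <= j < (M s).+1) `|c s j| * K <= (Pd M tau t)%:R * K.
Proof.
move=> K0 c1 c0.
rewrite /Pd natr_sum mulr_suml [X in _ <= X]big_mkcond /=.
apply: ler_sum_nat => s hs.
case: ifP => H.
- apply: le_trans (_ : \sum_(1 <= j < (M s).+1) K <= _).
    apply: ler_sum_nat => j hj; rewrite -[X in _ <= X]mul1r; apply: ler_wpM2r => //.
    by apply: c1 => //; lia.
  by rewrite sumr_const_nat subn1 /= mulr_natl.
- move/negbT: H; rewrite -ltnNge => H.
  rewrite big_nat big1 // => j hj; rewrite c0 ?normr0 ?mul0r //; lia.
Qed.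

Lemma cf_repr (R : realType) (n : nat) (M : nat -> nat) (g : nat -> nat -> 'rV[R]_n)
  (S : nat -> nat -> pred (nat * nat)) t i :
  cum_feedback M g S t i =
  \sum_(1 <= s < t) \sum_(1 <= j < (M s).+1) ((S t i (j, s))%:R : R) *: g s j.
Proof.
rewrite /cum_feedback; apply: eq_bigr => s _; rewrite big_mkcond /=.
by apply: eq_bigr => j _; case: (S t i (j, s)); rewrite ?scale1r ?scale0r.
Qed.

Lemma final_arith (R : realType) (r G MB Q a Tr S2 : R) :
  0 < r -> 0 < G -> 0 < MB -> 0 < Q -> Q ^+ 2 = a * Tr -> MB ^+ 2 * Tr = S2 ->
  r ^+ 2 / (r / (G * MB * Q)) + r / (G * MB * Q) * G ^+ 2 * (a * S2) = 2 * r * G * MB * Q.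
Proof.
move=> r0 G0 M0 Q0 QE SE.
rewrite -SE.
have -> : a * (MB ^+ 2 * Tr) = MB ^+ 2 * (a * Tr) by ring.
rewrite -QE.
field.
by rewrite !gt_eqF ?mulr_gt0.
Qed.

Lemma limit_arith (R : realType) (a b C1 C2 : R) :
  0 <= C1 -> 0 <= C2 -> (forall d, 0 < d -> a <= b + (C1 * d ^+ 2 + C2 * d)) -> a <= b.
Proof.
move=> C10 C20 H; apply/ler_addgt0Pr => e e0.
set d := Num.min 1 (e / (C1 + C2 + 1)).
have d0 : 0 < d by rewrite /d lt_min ltr01 divr_gt0 //; lra.
have d1 : d <= 1 by rewrite /d ge_min lexx.
have d2 : d <= e / (C1 + C2 + 1) by rewrite /d ge_min lexx orbT.
have d3 : d * (C1 + C2 + 1) <= e by rewrite -ler_pdivlMr //; lra.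
have := H d d0.
have : C1 * d ^+ 2 <= C1 * d by rewrite ler_wpM2l // expr2 ler_piMl // ltW.
have : 0 <= C1 * d by rewrite mulr_ge0 // ltW.
have : 0 <= C2 * d by rewrite mulr_ge0 // ltW.
nra.
Qed.


Unset Implicit Arguments.

Theorem theorem3 (R : realType) (n : nat) (nrm : 'rV[R]_n -> R)
  (X : set 'rV[R]_n) (h : 'rV[R]_n -> \bar R)
  (T tau : nat) (M : nat -> nat)
  (f : nat -> nat -> 'rV[R]_n -> R) (x g : nat -> nat -> 'rV[R]_n)
  (Sfb : nat -> nat -> pred (nat * nat)) (jr : nat -> nat)
  (G r : R) (p : 'rV[R]_n) :
  is_norm nrm ->
  closed X -> convex_set (X : set (convex_lmodType _)) ->
  lower_semicontinuous h ->
  strongly_convex_on nrm X h ->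
  (forall y, X y -> h y \is a fin_num) ->
  subdiff_cont_selection h ->
  (forall y, (0 <= h y)%E) ->
  (forall t, (1 <= t <= T)%N -> (1 <= M t)%N) ->
  (* feedback sets consist of past (agent, time) indices *)
  (forall t i j s, (1 <= t <= T)%N -> (1 <= i <= M t)%N -> Sfb t i (j, s) ->
     (1 <= s <= t - 1)%N && (1 <= j <= M s)%N) ->
  (* maximum delay bounded by tau *)
  (forall t i s j, (1 <= t <= T)%N -> (1 <= i <= M t)%N ->
     (1 <= s)%N -> (s + tau + 1 <= t)%N -> (1 <= j <= M s)%N -> Sfb t i (j, s)) ->
  (* convex, G-Lipschitz losses and subgradients *)
  0 < G ->
  (forall t i, (1 <= t <= T)%N -> (1 <= i <= M t)%N ->
     convex_fun (f t i) /\ lipschitz_wrt nrm G (f t i)) ->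
  (forall t i, (1 <= t <= T)%N -> (1 <= i <= M t)%N ->
     subgrad (f t i) (x t i) (g t i)) ->
  (* comparator *)
  0 < r -> X p -> (h p <= (r ^+ 2)%:E)%E ->
  (* D-DDA with constant stepsize eta *)
  let eta := r / (G * Mbar M T * Num.sqrt (((2 * tau + 1)%N)%:R * T%:R)) in
  (forall t i, (1 <= t <= T)%N -> (1 <= i <= M t)%N ->
     X (x t i) /\
     forall y, X y ->
       dot (cum_feedback M g Sfb t i) (x t i) + fine (h (x t i)) / eta <=
       dot (cum_feedback M g Sfb t i) y + fine (h y) / eta) ->
  (* reference agents *)
  (forall t, (1 <= t <= T)%N -> (1 <= jr t <= M t)%N) ->
  \sum_(1 <= t < T.+1) \sum_(1 <= i < (M t).+1) f t i (x t (jr t))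
    - \sum_(1 <= t < T.+1) \sum_(1 <= i < (M t).+1) f t i p
  <= 2 * r * G * Mbar M T * Num.sqrt (((2 * tau + 1)%N)%:R * T%:R).
Proof.
move=> hn clX cX lsc sc hf sel h0 M1 Sdom Sdel G0 fl sg r0 Xp hp eta xmin jrok.
case: (posnP T) => [T0|Tpos].
  by rewrite T0 !big_geq // subrr mulr0 sqrtr0 mulr0.
set S2 := \sum_(1 <= t < T.+1) ((M t)%:R : R) ^+ 2.
have S2pos : 0 < S2.
  rewrite /S2 big_ltn ?ltnS //.
  have s1 : 0 <= \sum_(2 <= t < T.+1) ((M t)%:R : R) ^+ 2.
    by apply: sumr_ge0 => t _; apply: sqr_ge0.
  have m1 : (1 <= M 1)%N by apply: M1; lia.
  have : (0 : R) < (M 1)%:R ^+ 2 by rewrite exprn_gt0 // ltr0n.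
  lra.
have Tr0 : (0 : R) < T%:R by rewrite ltr0n.
set MB := Mbar M T.
have MB2 : MB ^+ 2 * T%:R = S2.
  rewrite /MB /Mbar sqr_sqrtr; last by rewrite mulr_ge0 ?invr_ge0 ?ler0n // ltW.
  by rewrite mulrC mulrA mulfV ?mul1r // gt_eqF.
have MB0 : 0 < MB by rewrite /MB /Mbar sqrtr_gt0 mulr_gt0 // invr_gt0.
set Q := Num.sqrt (((2 * tau + 1)%N)%:R * T%:R).
have Q0 : 0 < Q by rewrite /Q sqrtr_gt0 mulr_gt0 // ltr0n; lia.
have Q2 : Q ^+ 2 = ((2 * tau + 1)%N)%:R * T%:R.
  by rewrite /Q sqr_sqrtr // mulr_ge0 // ler0n.
have eta0 : 0 < eta by rewrite /eta divr_gt0 // !mulr_gt0.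
have gb : forall s j v, (1 <= s <= T)%N -> (1 <= j <= M s)%N -> `|dot (g s j) v| <= G * nrm v.
  move=> s j v hs hj; have [_ lip] := fl s j hs hj.
  exact: grad_abs hn lip (sg s j hs hj).
set L := fun u => \sum_(1 <= s < u) \sum_(1 <= j < (M s).+1) g s j.
set ell := fun t => \sum_(1 <= j < (M t).+1) g t j.
set CF := cum_feedback M g Sfb.
have cbound : forall u tau' (c : nat -> nat -> R), (u <= T.+1)%N ->
    (forall s j, (1 <= s < u)%N -> (1 <= j <= M s)%N -> `|c s j| <= 1) ->
    (forall s j, (1 <= s < u)%N -> (1 <= j <= M s)%N -> (s + tau' + 1 <= u)%N -> c s j = 0) ->
    forall v, dot (\sum_(1 <= s < u) \sum_(1 <= j < (M s).+1) c s j *: g s j) v <=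
      ((Pd M tau' u)%:R * G) * nrm v.
  move=> u tau' c hu c1 c0 v.
  apply: le_trans (@dsum_bound _ _ nrm G M g u c v _) _.
    move=> s j hs hj; apply: gb => //; lia.
  rewrite -mulrA.
  apply: (@coef_bound _ M tau' u c (G * nrm v) _ c1 c0).
  by apply: mulr_ge0; [exact: ltW | exact: nrm_ge0].
have B1 : forall t i i', (1 <= t <= T)%N -> (1 <= i <= M t)%N -> (1 <= i' <= M t)%N ->
    forall v, dot (CF t i' - CF t i) v <= ((Pd M tau t)%:R * G) * nrm v.
  move=> t i i' ht hi hi' v.
  have -> : CF t i' - CF t i = \sum_(1 <= s < t) \sum_(1 <= j < (M s).+1)
      (((Sfb t i' (j, s))%:R - (Sfb t i (j, s))%:R : R) *: g s j).
    rewrite /CF !cf_repr -sumrB; apply: eq_bigr => s _; rewrite -sumrB.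
    by apply: eq_bigr => j _; rewrite scalerBl.
  apply: cbound; first by lia.
    by move=> s j _ _; case: (Sfb t i' (j, s)); case: (Sfb t i (j, s));
      rewrite /= ?subrr ?normr0 ?subr0 ?sub0r ?normrN ?normr1.
  move=> s j hs hj hst.
  rewrite (Sdel t i s j) // ?(Sdel t i' s j) ?subrr //; lia.
have B2 : forall t i, (1 <= t <= T)%N -> (1 <= i <= M t)%N ->
    forall v, dot (L t - CF t i) v <= ((Pd M tau t)%:R * G) * nrm v.
  move=> t i ht hi v.
  have -> : L t - CF t i = \sum_(1 <= s < t) \sum_(1 <= j < (M s).+1)
      ((1 - (Sfb t i (j, s))%:R : R) *: g s j).
    rewrite /CF /L !cf_repr -sumrB; apply: eq_bigr => s _; rewrite -sumrB.
    by apply: eq_bigr => j _; rewrite scalerBl scale1r.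
  apply: cbound; first by lia.
    by move=> s j _ _; case: (Sfb t i (j, s));
      rewrite /= ?subrr ?normr0 ?subr0 ?sub0r ?normrN ?normr1.
  move=> s j hs hj hst.
  rewrite (Sdel t i s j) // ?subrr //; lia.
have LS : forall t, (1 <= t)%N -> L t.+1 = L t + ell t.
  by move=> t ht; rewrite /L big_nat_recr.
have B4 : forall t, (1 <= t <= T)%N ->
    forall v, dot (ell t) v <= ((M t)%:R * G) * nrm v.
  move=> t ht v; rewrite /ell dot_suml.
  apply: le_trans (_ : \sum_(1 <= j < (M t).+1) G * nrm v <= _).
    apply: ler_sum_nat => j hj; apply: le_trans (ler_norm _) _; apply: gb => //; lia.
  by rewrite sumr_const_nat subn1 /= -mulrA mulr_natl.
have B5 : forall u, (1 <= u <= T.+1)%N ->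
    forall v, dot (L u - CF 1%N 1%N) v <= ((Pd M u u)%:R * G) * nrm v.
  move=> u hu v.
  have -> : L u - CF 1%N 1%N = \sum_(1 <= s < u) \sum_(1 <= j < (M s).+1) ((1 : R) *: g s j).
    rewrite /CF /cum_feedback big_geq // subr0 /L.
    by apply: eq_bigr => s _; apply: eq_bigr => j _; rewrite scale1r.
  apply: cbound; first by lia.
    by move=> s j _ _; rewrite normr1.
  move=> s j hs hj hst; lia.
have xm : forall t i, (1 <= t <= T)%N -> (1 <= i <= M t)%N ->
    X (x t i) /\ forall z, X z -> Phi h eta (CF t i) (x t i) <= Phi h eta (CF t i) z + 0.
  move=> t i ht hi; have [Xx xmn] := xmin t i ht hi; split => // z Xz.
  by rewrite addr0; exact: xmn.
have hM11 : (1 <= M 1)%N by apply: M1; lia.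
have [Xx0 x0m] : X (x 1%N 1%N) /\ forall z, X z -> Phi h eta (CF 1%N 1%N) (x 1%N 1%N) <= Phi h eta (CF 1%N 1%N) z + 0.
  by apply: xm; lia.
have K0 : forall k : nat, (0 : R) <= k%:R * G by move=> k; rewrite mulr_ge0 ?ler0n // ltW.
set SM := \sum_(1 <= t < T.+1) ((M t)%:R : R).
have SM0 : 0 <= SM by apply: sumr_ge0 => t _; apply: ler0n.
have combR : \sum_(1 <= t < T.+1) ((M t)%:R * (Pd M tau t)%:R) <= tau%:R * S2 :> R.
  have := comb M tau T; rewrite -(ler_nat R) !natrM natr_sum natr_sum.
  rewrite /S2; under eq_bigr do rewrite natrM; under [X in _ <= _ * _ * X -> _]eq_bigr do rewrite natrX.
  move=> H; have : 2 * (\sum_(1 <= t < T.+1) ((M t)%:R * (Pd M tau t)%:R)) <= 2 * (tau%:R * \sum_(1 <= t < T.+1) ((M t)%:R : R) ^+ 2).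
    by rewrite mulrA.
  by rewrite ler_pM2l //; lra.
have key : forall d, 0 < d ->
  \sum_(1 <= t < T.+1) \sum_(1 <= i < (M t).+1) f t i (x t (jr t))
    - \sum_(1 <= t < T.+1) \sum_(1 <= i < (M t).+1) f t i p
  <= 2 * r * G * MB * Q + ((T.+1)%:R / (8 * eta) * d ^+ 2 + 3 * G * SM * d).
  move=> d d0.
  set e := d ^+ 2 / (8 * eta).
  have e0 : 0 < e by rewrite /e divr_gt0 ?exprn_gt0 // mulr_gt0.
  have ed : 8 * eta * e <= d ^+ 2 by rewrite /e mulrC divfK // gt_eqF // mulr_gt0.
  have ych : forall t, exists yy, (1 <= t <= T.+1)%N ->
      X yy /\ forall z, X z -> Phi h eta (L t) yy <= Phi h eta (L t) z + e.
    move=> t; case: (boolP ((1 <= t <= T.+1)%N)) => ht; last by exists 0 => H; exfalso; move/negP: ht; apply.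
    have [yy [Xy ym]] := eps_min hn sc hf cX eta0 Xx0 x0m (K0 _) (B5 t ht) e0.
    by exists yy.
  have [y yP] := choice ych.
  have xme : forall t i, (1 <= t <= T)%N -> (1 <= i <= M t)%N ->
      X (x t i) /\ forall z, X z -> Phi h eta (CF t i) (x t i) <= Phi h eta (CF t i) z + e.
    move=> t i ht hi; have [Xx xmn] := xm t i ht hi; split => // z Xz.
    apply: le_trans (xmn z Xz) _; rewrite lerD2l; exact: ltW.
  have perI : forall t i, (1 <= t <= T)%N -> (1 <= i <= M t)%N ->
      f t i (x t (jr t)) - f t i p <=
      dot (g t i) (y t) - dot (g t i) p + 2 * G * (eta * ((Pd M tau t)%:R * G) + d).
    move=> t i ht hi.
    have hj := jrok t ht.
    have [Xi xim] := xme t i ht hi.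
    have [Xj xjm] := xme t (jr t) ht hj.
    have hty : (1 <= t <= T.+1)%N by clear -ht; lia.
    have [Xy ym] := yP t hty.
    have st1 := stab hn sc hf cX eta0 Xj Xi xjm xim (K0 _) (B1 t (jr t) i ht hj hi) d0 (ltW e0) ed.
    have st2 := stab hn sc hf cX eta0 Xi Xy xim ym (K0 _) (B2 t i ht hi) d0 (ltW e0) ed.
    have lip := (fl t i ht hi).2 (x t (jr t)) (x t i).
    have sgp := sg t i ht hi p.
    have gy := gb t i (x t i - y t) ht hi.
    rewrite !dotBr in sgp gy.
    move: st1 st2 lip sgp gy.
    set B := eta * _ + d.
    set a := nrm _; set b := nrm _.
    move=> st1 st2 /ler_normlP [lip1 lip2] sgp /ler_normlP [gy1 gy2].
    have Ga : G * a <= G * B by rewrite ler_wpM2l // ltW.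
    have Gb : G * b <= G * B by rewrite ler_wpM2l // ltW.
    clear -Ga Gb lip1 lip2 sgp gy1 gy2.
    lra.
  have perT : forall t, (1 <= t <= T)%N ->
      \sum_(1 <= i < (M t).+1) (f t i (x t (jr t)) - f t i p) <=
      dot (ell t) (y t.+1) - dot (ell t) p +
      (eta * G ^+ 2 * ((M t)%:R ^+ 2 + 2 * ((M t)%:R * (Pd M tau t)%:R)) + 3 * G * d * (M t)%:R).
    move=> t ht.
    apply: le_trans (_ : \sum_(1 <= i < (M t).+1) (dot (g t i) (y t) - dot (g t i) p +
       2 * G * (eta * ((Pd M tau t)%:R * G) + d)) <= _).
      by apply: ler_sum_nat => i hi; apply: perI => //; clear -hi; lia.
    rewrite big_split /= sumrB sumr_const_nat subn1 -!dot_suml.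
    have hty : (1 <= t <= T.+1)%N by clear -ht; lia.
    have hty1 : (1 <= t.+1 <= T.+1)%N by clear -ht; lia.
    have [Xy ym] := yP t hty.
    have [Xy1 ym1] := yP t.+1 hty1.
    have B4' : forall v, dot (L t.+1 - L t) v <= ((M t)%:R * G) * nrm v.
      move=> v; rewrite LS; last by clear -ht; lia.
      rewrite addrAC subrr add0r; exact: B4.
    have st3 := stab hn sc hf cX eta0 Xy Xy1 ym ym1 (K0 _) B4' d0 (ltW e0) ed.
    have b4 := B4 t ht (y t - y t.+1).
    rewrite dotBr in b4.
    have mg := K0 (M t).
    move: st3 b4 mg; rewrite /ell.
    set B := eta * _ + d; set nn := nrm _.
    set d1 := dot _ (y t); set d2 := dot _ (y t.+1); set d3 := dot _ p.
    move=> st3 b4 mg.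
    have h1 : (M t)%:R * G * nn <= (M t)%:R * G * B by rewrite ler_wpM2l.
    have E1 : (2 * G * (eta * ((Pd M tau t)%:R * G) + d)) *+ M t + (M t)%:R * G * B =
      eta * G ^+ 2 * ((M t)%:R ^+ 2 + 2 * ((M t)%:R * (Pd M tau t)%:R)) + 3 * G * d * (M t)%:R.
      by rewrite -mulr_natl /B; ring.
    clear -h1 E1 b4.
    lra.
  have ftrl : \sum_(1 <= t < T.+1) dot (ell t) (y t.+1) - \sum_(1 <= t < T.+1) dot (ell t) p
      <= r ^+ 2 / eta + (T.+1)%:R * e.
    set u := fun k => Phi h eta (L k) (y k).
    have tel := @telescope_sumr _ 1 T.+1 u isT.
    have each : \sum_(1 <= t < T.+1) (dot (ell t) (y t.+1) - e) <= \sum_(1 <= t < T.+1) (u t.+1 - u t).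
      apply: ler_sum_nat => t ht.
      have hty : (1 <= t <= T.+1)%N by clear -ht; lia.
      have hty1 : (1 <= t.+1 <= T.+1)%N by clear -ht; lia.
      have [Xy ym] := yP t hty.
      have [Xy1 _] := yP t.+1 hty1.
      have := ym _ Xy1.
      rewrite /u /Phi LS; last by clear -ht; lia.
      rewrite !dotDl.
      clear; lra.
    rewrite tel sumrB sumr_const_nat subn1 /= in each.
    have hT1 : (1 <= T.+1 <= T.+1)%N by clear; lia.
    have [XyT ymT] := yP T.+1 hT1.
    have uT := ymT _ Xp.
    have E2 : Phi h eta (L T.+1) p = \sum_(1 <= t < T.+1) dot (ell t) p + fine (h p) / eta.
      by rewrite /Phi /L dot_suml.
    have u1 : 0 <= u 1%N.
      rewrite /u /Phi /L big_geq // dot0l add0r.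
      by apply: divr_ge0; [apply: fine_ge0; apply: h0 | exact: ltW].
    have hpr : fine (h p) / eta <= r ^+ 2 / eta.
      rewrite ler_pM2r ?invr_gt0 //.
      by move: hp; rewrite -(fineK (hf p Xp)) lee_fin.
    have Te : (T.+1)%:R * e = e *+ T + e by rewrite mulr_natl mulrS addrC.
    rewrite Te.
    move: each uT; rewrite E2 /u.
    clear -u1 hpr; rewrite /u in u1.
    move=> each uT; lra.
  have E : \sum_(1 <= t < T.+1) \sum_(1 <= i < (M t).+1) f t i (x t (jr t))
      - \sum_(1 <= t < T.+1) \sum_(1 <= i < (M t).+1) f t i p =
      \sum_(1 <= t < T.+1) \sum_(1 <= i < (M t).+1) (f t i (x t (jr t)) - f t i p).
    by rewrite -sumrB; apply: eq_bigr => t _; rewrite sumrB.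
  rewrite E.
  apply: le_trans (_ : _ <= \sum_(1 <= t < T.+1) (dot (ell t) (y t.+1) - dot (ell t) p +
      (eta * G ^+ 2 * ((M t)%:R ^+ 2 + 2 * ((M t)%:R * (Pd M tau t)%:R)) + 3 * G * d * (M t)%:R))) _.
    by apply: ler_sum_nat => t ht; apply: perT; clear -ht; lia.
  rewrite big_split /= sumrB big_split /= -!mulr_sumr big_split /= -mulr_sumr -/S2 -/SM.
  have fa := final_arith r0 G0 MB0 Q0 Q2 MB2.
  rewrite -/eta in fa.
  have aE : ((2 * tau + 1)%N)%:R = 2 * tau%:R + 1 :> R by rewrite natrD natrM.
  rewrite aE in fa.
  have eG : 0 <= eta * G ^+ 2 by rewrite mulr_ge0 ?sqr_ge0 // ltW.
  have c2 : eta * G ^+ 2 * (2 * \sum_(1 <= t < T.+1) ((M t)%:R * (Pd M tau t)%:R)) <=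
            eta * G ^+ 2 * (2 * (tau%:R * S2)).
    by rewrite ler_wpM2l // ler_pM2l.
  have Te : (T.+1)%:R * e = (T.+1)%:R / (8 * eta) * d ^+ 2.
    by rewrite /e; field; rewrite gt_eqF // mulr_gt0.
  have E3 : 3 * G * d * SM = 3 * G * SM * d by ring.
  rewrite E3.
  move: ftrl c2 fa Te.
  set A1 := \sum_(1 <= t < T.+1) dot _ _.
  set A2 := \sum_(1 <= t < T.+1) dot _ _.
  set A3 := \sum_(1 <= t < T.+1) _ * _.
  move=> ftrl c2 fa Te.
  have E4 : eta * G ^+ 2 * (S2 + 2 * A3) = eta * G ^+ 2 * S2 + eta * G ^+ 2 * (2 * A3) by ring.
  have E5 : eta * G ^+ 2 * ((2 * tau%:R + 1) * S2) = eta * G ^+ 2 * (2 * (tau%:R * S2)) + eta * G ^+ 2 * S2 by ring.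
  rewrite E4.
  clear -ftrl c2 fa Te E5.
  lra.
apply: (limit_arith _ _ key).
  by apply: divr_ge0; [apply: ler0n | rewrite mulr_ge0 // ltW].
by rewrite !mulr_ge0 // ltW.
Qed.
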